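(* Let $\Omega\subset\mathbb{R}^d$ be a non-empty, bounded, open set and let $\Phi\colon\mathbb{R}^N_+\to[0,\infty)$ satisfy (Φ.3). Then every $1$-adjusted $(1,\Phi)$-eigen-$N$-cluster of $\Omega$ is a $\Phi$-Cheeger $N$-cluster of $\Omega$.
   Context: All sets are Lebesgue measurable; $|E|$ is Lebesgue measure and $P(E)$ the distributional (De Giorgi) perimeter; set inclusions and disjointness are understood up to null sets. For $F\subset\mathbb{R}^d$, $h(F)=\inf\{P(E)/|E| : E\subset F,\ |E|>0\}\in[0,\infty]$. An $N$-set of $F$ is an $N$-tuple $\mathcal E=(\mathcal E_1,\dots,\mathcal E_N)$ with $\mathcal E_i\subset F$, $|\mathcal E_i|>0$, and $|\mathcal E_i\cap\mathcal E_j|=0$ for $i\neq j$; it is an $N$-cluster if moreover $P(\mathcal E_i)<\infty$ for all $i$. For an $N$-set $\mathcal E$ of $F$ let $F^{\mathcal E}_i=\bigcup_{j\ne i}\mathcal E_j$; an $N$-cluster $\mathcal E$ of $F$ is $1$-adjusted if $P(\mathcal E_i)/|\mathcal E_i|=h(F\setminus F^{\mathcal E}_i)$ for every $i$. $\mathbb{R}^N_+=\{v\in\mathbb{R}^N: v_i\ge0\}$ with componentwise order ($v\le w$ iff $v_i\le w_i$ for all $i$). (Φ.3): $v\le w\Rightarrow\Phi(v)\le\Phi(w)$. $H^{\Phi,N}(F)=\inf\{\Phi(P(\mathcal E_1)/|\mathcal E_1|,\dots,P(\mathcal E_N)/|\mathcal E_N|) : \mathcal E \text{ an } N\text{-cluster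 of } F\}$, minimizers being $\Phi$-Cheeger $N$-clusters. $\mathscr{L}^{\Phi,N}_{1,1}(F)=\inf\{\Phi(h(\mathcal E_1),\dots,h(\mathcal E_N)) : \mathcal E \text{ an } N\text{-set of } F\}$; a minimizer which is an $N$-cluster is a $(1,\Phi)$-eigen-$N$-cluster. *)

(* Defs.v *)
From HB Require Import structures.
From mathcomp Require Import all_boot all_order all_algebra.
From mathcomp Require Import all_classical all_reals all_analysis.
Set Implicit Arguments. Unset Strict Implicit. Unset Printing Implicit Defensive.
Import Order.TTheory GRing.Theory Num.Theory.
Import numFieldNormedType.Exports.
Local Open Scope classical_set_scope.
Local Open Scope ring_scope.

Section Lebesgue.
Variables (R : realType) (d : nat).

Definition coord (x : 'rV[R]_d) (i : 'I_d) : R := x ord0 i.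

Definition box (a b : 'rV[R]_d) : set 'rV[R]_d :=
  [set x | forall i, coord a i <= coord x i /\ coord x i < coord b i].

Definition box_vol (a b : 'rV[R]_d) : R := \prod_(i < d) (coord b i - coord a i).

Definition boxes : set (set 'rV[R]_d) :=
  [set B | exists a b, (forall i, coord a i <= coord b i) /\ B = box a b].

(** elementary volume: on nonempty boxes the box volume, 0 on the empty set,
    +oo on any other set (so such sets are useless in covers) *)
Definition box_content (A : set 'rV[R]_d) : \bar R :=
  if `[< A = set0 >] then 0%E
  else ereal_inf [set r | exists a b, [/\ (forall i, coord a i <= coord b i),
                                          A = box a b & r = (box_vol a b)%:E]].

Lemma box_content0 : box_content set0 = 0%E.
Proof. by rewrite /box_content asboolT. Qed.

Lemma box_content_ge0 A : (0 <= box_content A)%E.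
Proof.
rewrite /box_content; case: asboolP => // _.
apply: le_ereal_inf_tmp => _ [a [b [hab _ ->]]].
rewrite lee_fin; apply: prodr_ge0 => i _; rewrite subr_ge0; exact: hab.
Qed.

Definition RdB := g_sigma_algebraType boxes.

Definition leb_outer : set RdB -> \bar R := mu_ext (box_content : set RdB -> _).

HB.instance Definition _ := isOuterMeasure.Build R RdB leb_outer
  (@mu_ext0 _ _ _ (box_content : set RdB -> _) box_content0 box_content_ge0)
  (mu_ext_ge0 (box_content_ge0 : forall A : set RdB, _))
  (le_mu_ext (box_content : set RdB -> _))
  (mu_ext_sigma_subadditive (box_content_ge0 : forall A : set RdB, _)).

Definition Rd := caratheodory_type leb_outer.

End Lebesgue.

Notation leb R d :=
  (@leb_outer R d : set (caratheodory_type (@leb_outer R d)) -> \bar R) (only parsing).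


Local Open Scope ereal_scope.

Section Perimeter.
Variables (R : realType) (d : nat).

Definition e_ (i : 'I_d) : 'rV[R]_d := delta_mx ord0 i.

Definition C1c (phi : 'rV[R]_d -> 'rV[R]_d) : Prop :=
  [/\ forall i x, derivable phi x (e_ i),
      forall i, continuous (fun x => 'D_(e_ i) phi x)
    & compact (closure [set x | phi x != 0%R])].

Definition euclid_le1 (phi : 'rV[R]_d -> 'rV[R]_d) : Prop :=
  forall x, (\sum_(i < d) (phi x ord0 i) ^+ 2 <= 1)%R.

Definition divergence (phi : 'rV[R]_d -> 'rV[R]_d) (x : 'rV[R]_d) : R :=
  (\sum_(i < d) ('D_(e_ i) phi x) ord0 i)%R.

Definition perimeter (E : set (Rd R d)) : \bar R :=
  ereal_sup [set \int[leb R d]_(x in E) (divergence phi x)%:E |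
              phi in [set phi | C1c phi /\ euclid_le1 phi]].

End Perimeter.

Section Clusters.
Variables (R : realType) (d N : nat).
Local Notation Rd := (Rd R d).
Local Notation leb := (leb R d).
Local Notation P := (@perimeter R d).

Definition cheeger_h (F : set Rd) : \bar R :=
  ereal_inf [set P E / leb E | E in
    [set E : set Rd | [/\ measurable E, leb (E `\` F) = 0 & 0 < leb E]]].

Definition is_Nset (F : set Rd) (E : 'I_N -> set Rd) : Prop :=
  (forall i, [/\ measurable (E i), leb (E i `\` F) = 0 & 0 < leb (E i)]) /\
  (forall i j, i != j -> leb (E i `&` E j) = 0).

Definition is_Ncluster (F : set Rd) (E : 'I_N -> set Rd) : Prop :=
  is_Nset F E /\ (forall i, P (E i) < +oo).

Definition Fcompl (E : 'I_N -> set Rd) (i : 'I_N) : set Rd :=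
  \bigcup_(j in [set j | j != i]) E j.

Definition one_adjusted (F : set Rd) (E : 'I_N -> set Rd) : Prop :=
  is_Ncluster F E /\
  (forall i, P (E i) / leb (E i) = cheeger_h (F `\` Fcompl E i)).

(** Phi applied to a vector of extended reals: Phi(v) if all entries are finite,
    +oo otherwise (such entries never contribute to the infima below). *)
Definition PhiE (Phi : ('I_N -> R) -> R) (v : 'I_N -> \bar R) : \bar R :=
  if `[< forall i, v i \is a fin_num >] then (Phi (fun i => fine (v i)))%:E
  else +oo.

Definition H_PhiN (Phi : ('I_N -> R) -> R) (F : set Rd) : \bar R :=
  ereal_inf [set PhiE Phi (fun i => P (E i) / leb (E i)) | E in is_Ncluster F].

Definition Phi_Cheeger_cluster (Phi : ('I_N -> R) -> R) (F : set Rd)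
  (E : 'I_N -> set Rd) : Prop :=
  is_Ncluster F E /\ PhiE Phi (fun i => P (E i) / leb (E i)) = H_PhiN Phi F.

Definition L_PhiN (Phi : ('I_N -> R) -> R) (F : set Rd) : \bar R :=
  ereal_inf [set PhiE Phi (fun i => cheeger_h (E i)) | E in is_Nset F].

Definition eigen_cluster (Phi : ('I_N -> R) -> R) (F : set Rd)
  (E : 'I_N -> set Rd) : Prop :=
  is_Ncluster F E /\ PhiE Phi (fun i => cheeger_h (E i)) = L_PhiN Phi F.

End Clusters.

(* Main.v *)
Require Import Defs.
From HB Require Import structures.
From mathcomp Require Import all_boot all_order all_algebra.
From mathcomp Require Import all_classical all_reals all_analysis.
Import Order.TTheory GRing.Theory Num.Theory.
Import numFieldNormedType.Exports.
Local Open Scope classical_set_scope.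
Local Open Scope ring_scope.

Section Helpers.
Variables (R : realType) (d N : nat).
Local Open Scope ereal_scope.

Lemma int0_outer (T : pointedType) (mu : {outer_measure set T -> \bar R})
  (D : set (caratheodory_type mu)) (f : caratheodory_type mu -> \bar R) :
  (forall x, f x = 0) -> @integral _ (caratheodory_type mu) R mu D f = 0.
Proof. by move=> f0; apply: integral0_eq => x _; exact: f0. Qed.

Lemma perimeter_ge0 (E : set (Rd R d)) : 0 <= perimeter E.
Proof.
have D0 : forall (i : 'I_d) (x : 'rV[R]_d),
   'D_(e_ R i) (fun _ : 'rV[R]_d => (0%R : 'rV[R]_d)) x = 0%R.
  by move=> i x; exact: derive_cst.
apply: ereal_sup_ubound; exists (fun _ => 0%R).
  split.
  - split.
    + by move=> i x; exact: derivable_cst.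
    + move=> i.
      have -> : (fun x => 'D_(e_ R i) (fun _ : 'rV[R]_d => (0%R : 'rV[R]_d)) x) = cst 0%R.
        by apply/funext => x; exact: D0.
      exact: cst_continuous.
    + rewrite (_ : [set x | _] = set0); first by rewrite closure0; exact: compact0.
      by apply/seteqP; split => x //=; rewrite eqxx.
  - by move=> x; rewrite big1 // => i _; rewrite mxE expr0n.
rewrite /divergence.
apply: int0_outer => x /=.
by rewrite big1 // => i _; rewrite D0 mxE.
Qed.


Lemma leb_ge0 (A : set (Rd R d)) : 0 <= leb R d A.
Proof. exact: outer_measure_ge0. Qed.

Lemma ratio_ge0 (A : set (Rd R d)) : 0 <= perimeter A / leb R d A.
Proof. by apply: mule_ge0; [exact: perimeter_ge0| rewrite inve_ge0; exact: leb_ge0]. Qed.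

Lemma cheeger_ge0 (F : set (Rd R d)) : 0 <= cheeger_h F.
Proof. by apply: le_ereal_inf_tmp => _ [A _ <-]; exact: ratio_ge0. Qed.

Lemma cheeger_le_ratio (A : set (Rd R d)) : measurable A -> 0 < leb R d A ->
  cheeger_h A <= perimeter A / leb R d A.
Proof.
move=> mA A0; apply: ereal_inf_lbound; exists A => //; split => //.
by rewrite setDv; exact: outer_measure0.
Qed.

Lemma PhiE_mono (Phi : ('I_N -> R) -> R) (v w : 'I_N -> \bar R) :
  (forall v w : 'I_N -> R, (forall i, (0 <= v i)%R) -> (forall i, (0 <= w i)%R) ->
     (forall i, (v i <= w i)%R) -> (Phi v <= Phi w)%R) ->
  (forall i, 0 <= v i) -> (forall i, v i <= w i) -> PhiE Phi v <= PhiE Phi w.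
Proof.
move=> Pm v0 vw; rewrite /PhiE.
case: (asboolP (forall i, w i \is a fin_num)) => wf; last by rewrite leey.
have vf : forall i, v i \is a fin_num.
  move=> i; rewrite ge0_fin_numE //; apply: (le_lt_trans (vw i)).
  by have := wf i; rewrite ge0_fin_numE // (le_trans (v0 i) (vw i)).
rewrite (asboolT vf) lee_fin; apply: Pm => i.
- exact: fine_ge0.
- exact: fine_ge0 (le_trans (v0 i) (vw i)).
- exact: fine_le.
Qed.


Lemma null3 (T : Type) (mu : {outer_measure set T -> \bar R})
  (X A B : set T) (G : (set T)^nat) :
  X `<=` A `|` (B `|` \bigcup_n G n) -> mu A = 0 -> mu B = 0 ->
  (forall n, mu (G n) = 0) -> mu X = 0.
Proof.
move=> sub hA hB hG; apply/eqP; rewrite eq_le outer_measure_ge0 andbT.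
apply: (le_trans (le_outer_measure mu _ _ sub)).
apply: (le_trans (outer_measureU2 _ _ _)); rewrite hA add0e.
apply: (le_trans (outer_measureU2 _ _ _)); rewrite hB add0e.
apply: (le_trans (outer_measure_sigma_subadditive _ _)).
by rewrite eseries0 // => n _ _; exact: hG.
Qed.

Lemma null_sub (Omega : set (Rd R d)) (E : 'I_N -> set (Rd R d)) i
  (A : set (Rd R d)) : is_Nset Omega E -> leb R d (A `\` E i) = 0 ->
  leb R d (A `\` (Omega `\` Fcompl E i)) = 0.
Proof.
move=> [hE hI] hA.
pose G (n : nat) : set (Rd R d) := if insub n is Some j then
  (if j != i then E i `&` E j else set0) else set0.
have sub : A `\` (Omega `\` Fcompl E i) `<=`
    (A `\` E i) `|` ((E i `\` Omega) `|` \bigcup_n G n).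
  move=> x [Ax nOF]; have [Eix|?] := pselect (E i x); last by left.
  right; have [Ox|?] := pselect (Omega x); last by left.
  right; have : Fcompl E i x by apply: contrapT => nF; apply: nOF.
  case=> j /= ji Ejx; exists (val j) => //; rewrite /G valK ji; by split.
have G0 : forall n, leb R d (G n) = 0.
  move=> n; rewrite /G; case: insub => [jj|]; last exact: outer_measure0.
  case: ifP => jji; last exact: outer_measure0.
  by apply: hI; rewrite eq_sym.
case: (hE i) => _ h0 _.
exact: (@null3 (RdB R d) (@leb_outer R d) _ _ _ _ sub hA h0 G0).
Qed.

End Helpers.

Theorem mainTheorem2 (R : realType) (d N : nat) (Omega : set 'rV[R]_d)
  (Phi : ('I_N -> R) -> R) :
  Omega !=set0 -> bounded_set Omega -> open Omega ->
  (forall v : 'I_N -> R, (forall i, 0 <= v i) -> 0 <= Phi v) ->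
  (forall v w : 'I_N -> R, (forall i, 0 <= v i) -> (forall i, 0 <= w i) ->
     (forall i, v i <= w i) -> Phi v <= Phi w) ->
  forall E : 'I_N -> set (Rd R d),
    one_adjusted Omega E -> eigen_cluster Phi Omega E ->
    Phi_Cheeger_cluster Phi Omega E.
Proof.
move=> _ _ _ Phi0 Phim E [Ecl hadj] [_ heig].
have Ens := Ecl.1.
have req : forall i, (perimeter (E i) / leb R d (E i) = cheeger_h (E i))%E.
  move=> i; case: (Ens.1 i) => mEi _ posEi.
  apply: le_anti; rewrite cheeger_le_ratio // andbT.
  rewrite hadj; apply: ereal_inf_le_tmp => _ [A [mA hA pA] <-].
  by exists A => //; split => //; exact: null_sub Ens hA.
split => //.
apply: le_anti; apply/andP; split; last first.
  by apply: ereal_inf_lbound; exists E.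
apply: le_ereal_inf_tmp => _ [E' E'cl <-].
have -> : (fun i => perimeter (E i) / leb R d (E i))%E = (fun i => cheeger_h (E i)).
  by apply/funext => i; exact: req.
rewrite heig.
apply: (le_trans _ (@PhiE_mono R N Phi (fun i => cheeger_h (E' i)) _ Phim _ _)).
- by apply: ereal_inf_lbound; exists E' => //; exact: E'cl.1.
- by move=> i; exact: cheeger_ge0.
- move=> i; case: (E'cl.1.1 i) => mE' _ pE'.
  exact: cheeger_le_ratio.
Qed.
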